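(* Let $G$ be a torsion abelian group. If there exists a surjective endomorphism $\varphi\colon G\to G$ that is positively expansive, then $G$ is finite.
   Context: $\mathbb N=\{0,1,2,\dots\}$. An endomorphism $\varphi\colon G\to G$ of an abelian group is positively expansive if there is a finite subgroup $S\leq G$ such that for every finite subgroup $F\leq G$ there is $n\in\mathbb N$ with $F\subseteq\sum_{k=0}^n\varphi^kS$. *)

(* Defs.v *)
(* abelian groups are zmodTypes (written additively). *)
From HB Require Import structures.
From mathcomp Require Import all_boot all_order all_algebra.
Set Implicit Arguments. Unset Strict Implicit. Unset Printing Implicit Defensive.
Import GRing.Theory.
Local Open Scope ring_scope.

Section Defs.
Variable G : zmodType.

Definition torsion_group : Prop :=
  forall x : G, exists n : nat, (0 < n)%N /\ x *+ n = 0.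

Definition is_subgroup (S : G -> Prop) : Prop :=
  S 0 /\ (forall x y, S x -> S y -> S (x - y)).

Definition finite_subset (S : G -> Prop) : Prop :=
  exists s : seq G, forall x, S x <-> x \in s.

Definition finite_subgroup (S : G -> Prop) : Prop :=
  is_subgroup S /\ finite_subset S.

Definition iter_sum (phi : G -> G) (S : G -> Prop) (n : nat) : G -> Prop :=
  fun x => exists f : nat -> G,
    (forall k, (k <= n)%N -> S (f k)) /\
    x = \sum_(0 <= k < n.+1) iter k phi (f k).

Definition positively_expansive (phi : G -> G) : Prop :=
  exists S : G -> Prop, finite_subgroup S /\
    forall F : G -> Prop, finite_subgroup F ->
      exists n : nat, forall x, F x -> iter_sum phi S n x.

Definition finite_group : Prop := exists s : seq G, forall x : G, x \in s.

End Defs.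

(* Main.v *)
Require Import Defs.
From mathcomp Require Import all_boot all_order all_algebra.
From Stdlib Require Import Setoid.
Set Implicit Arguments. Unset Strict Implicit. Unset Printing Implicit Defensive.
Import GRing.Theory.
Local Open Scope ring_scope.

Section Aux.
Variable G : zmodType.
Variable phi : {additive G -> G}.

Lemma iter_sum0 (S : G -> Prop) x : iter_sum phi S 0 x <-> S x.
Proof.
split.
- by case=> f [Hf ->]; rewrite big_nat1 /=; apply: Hf.
- move=> Sx; exists (fun _ => x); split=> //; by rewrite big_nat1.
Qed.

Lemma iter_sumS (S : G -> Prop) n x :
  iter_sum phi S n.+1 x <->
  exists s y, S s /\ iter_sum phi S n y /\ x = s + phi y.
Proof.
split.
- case=> f [Hf ->].
  exists (f 0%N), (\sum_(0 <= k < n.+1) iter k phi (f k.+1)).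
  split; first exact: Hf.
  split.
    exists (fun k => f k.+1); split=> // k hk; apply: Hf; exact: hk.
  rewrite big_nat_recl // raddf_sum /=; congr (_ + _).
- case=> s [y [Hs [[g [Hg ->]] ->]]].
  exists (fun k => if k is k'.+1 then g k' else s); split.
    by case=> // k hk; apply: Hg.
  by rewrite [RHS]big_nat_recl //= raddf_sum.
Qed.

Lemma subgroup_add (S : G -> Prop) : is_subgroup S ->
  forall x y, S x -> S y -> S (x + y).
Proof.
case=> S0 SB x y Sx Sy.
have := SB x (0 - y) Sx (SB 0 y S0 Sy).
by rewrite sub0r opprK.
Qed.

Lemma iter_sum_add (S : G -> Prop) : is_subgroup S ->
  forall n x y, iter_sum phi S n x -> iter_sum phi S n y -> iter_sum phi S n (x + y).
Proof.
move=> HS; elim=> [|n IH] x y.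
- rewrite !iter_sum0; exact: subgroup_add.
- rewrite !iter_sumS => [[s1 [y1 [H1 [K1 ->]]]]] [s2 [y2 [H2 [K2 ->]]]].
  exists (s1 + s2), (y1 + y2); split; first exact: subgroup_add.
  split; first exact: IH.
  by rewrite raddfD addrACA.
Qed.

Lemma iter_sum_mono (S : G -> Prop) : is_subgroup S ->
  forall n x, iter_sum phi S n x -> iter_sum phi S n.+1 x.
Proof.
move=> [S0 _]; elim=> [|n IH] x.
- rewrite iter_sum0 iter_sumS => Sx; exists x, 0; split=> //; split.
    by rewrite iter_sum0.
  by rewrite raddf0 addr0.
- rewrite iter_sumS => [[s [y [Hs [Ky ->]]]]].
  rewrite iter_sumS; exists s, y; split=> //; split=> //; exact: IH.
Qed.

Lemma iter_sum_mono2 (S : G -> Prop) : is_subgroup S ->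
  forall n k x, iter_sum phi S n x -> iter_sum phi S (n + k) x.
Proof.
move=> HS n; elim=> [|k IH] x Hx; first by rewrite addn0.
rewrite addnS; apply: iter_sum_mono => //; exact: IH.
Qed.

Lemma iter_sum_fin (S : G -> Prop) : finite_subset S ->
  forall n, finite_subset (iter_sum phi S n).
Proof.
case=> ss Hss; elim=> [|n [kn Hkn]].
- by exists ss => x; rewrite iter_sum0.
- exists [seq s + phi y | s <- ss, y <- kn] => x; rewrite iter_sumS; split.
  + case=> s [y [Hs [Ky ->]]]; apply/allpairsP; exists (s, y) => /=.
    by split=> //; [apply/Hss | apply/Hkn].
  + case/allpairsP => [[s y] /= [Hs Hy ->]].
    by exists s, y; split; [apply/Hss | split=> //; apply/Hkn].
Qed.

Lemma gen_finite : torsion_group G ->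
  forall l : seq G, exists F, finite_subgroup F /\ forall x, x \in l -> F x.
Proof.
move=> Ht; elim=> [|x l [F [[[F0 FB] [hs Hhs]] Hl]]].
- exists (fun y => y = 0); split=> //; split.
    by split=> // a b -> ->; rewrite subr0.
  by exists [:: 0] => y; rewrite inE; split=> [->|/eqP].
- have [N [N0 xN]] := Ht x.
  have xmod : forall i, x *+ i = x *+ (i %% N).
    move=> i; rewrite {1}(divn_eq i N) mulrnDr mulnC mulrnA xN mul0rn add0r //.
  exists (fun y => exists h i, F h /\ y = h + x *+ i); split; first split.
  + split; first by exists 0, 0%N; rewrite addr0.
    move=> a b [h1 [i1 [H1 ->]]] [h2 [i2 [H2 ->]]].
    exists (h1 - h2), (i1 + i2 * N.-1)%N; split; first exact: FB.
    rewrite mulrnDr.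
    have -> : x *+ (i2 * N.-1) = - x *+ i2.
      apply: (addrI (x *+ i2)); rewrite mulNrn subrr -mulrnDr -{1}(muln1 i2) -mulnDr.
      by rewrite add1n prednK // mulnC mulrnA xN mul0rn.
    by rewrite mulNrn opprD addrACA.
  + exists [seq h + x *+ i | h <- hs, i <- iota 0 N] => y; split.
    * case=> h [i [Hh ->]]; apply/allpairsP; exists (h, i %% N)%N => /=.
      split; [by apply/Hhs | by rewrite mem_iota add0n ltn_mod N0 | by rewrite -xmod].
    * case/allpairsP => [[h i] /= [Hh _ ->]]; exists h, i; split=> //; exact/Hhs.
  + move=> y; rewrite inE => /orP [/eqP -> | yl].
      by exists 0, 1%N; rewrite add0r.
    by exists y, 0%N; rewrite addr0; split=> //; apply: Hl.
Qed.

Lemma preimages : (forall y : G, exists x : G, phi x = y) ->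
  forall l : seq G, exists l' : seq G, forall s, s \in l -> exists2 x, x \in l' & phi x = s.
Proof.
move=> Hs; elim=> [|a l [l' Hl']]; first by exists [::].
have [b Hb] := Hs a; exists (b :: l') => s; rewrite inE => /orP [/eqP -> |sl].
  by exists b => //; rewrite inE eqxx.
have [x xl <-] := Hl' s sl; by exists x => //; rewrite inE xl orbT.
Qed.

End Aux.

Theorem theorem4p2 (G : zmodType) (phi : {additive G -> G}) :
  torsion_group G ->
  (forall y : G, exists x : G, phi x = y) ->
  positively_expansive phi ->
  finite_group G.
Proof.
move=> Ht Hsurj [S [[HS [ss Hss]] Hexp]].
have [l' Hl'] := preimages Hsurj ss.
have [F [HF HFl]] := gen_finite Ht (ss ++ l').
have [n Hn] := Hexp F HF.
pose K := iter_sum phi S.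
have SinK : forall s, S s -> exists2 z, K n z & phi z = s.
  move=> s /Hss sss; have [x xl <-] := Hl' s sss; exists x => //.
  by apply: Hn; apply: HFl; rewrite mem_cat xl orbT.
have Kadd := iter_sum_add (phi:=phi) HS.
have Kpre : forall y, K n y -> exists2 z, K n z & phi z = y.
  move=> y /(iter_sum_mono (phi:=phi) HS); rewrite /K iter_sumS => [[s [w [Hs [Kw ->]]]]].
  have [z Kz <-] := SinK s Hs; exists (z + w); first exact: Kadd.
  by rewrite raddfD.
have [kn Hkn] := iter_sum_fin phi (ex_intro _ ss Hss) n.
pose u := undup kn.
have Hu : forall y, K n y <-> y \in u by move=> y; rewrite mem_undup; exact: Hkn.
have sub : {subset u <= map phi u}.
  move=> y /Hu /Kpre [z /Hu zu <-]; exact: map_f.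
have [_ equ] := uniq_min_size (undup_uniq kn) sub (eq_leq (size_map phi u)).
have Kstab : forall z, K n z -> K n (phi z).
  by move=> z /Hu zu; apply/Hu; rewrite equ; exact: map_f.
have Kall : forall m y, K m y -> K n y.
  elim=> [|m IH] y.
  - rewrite /K iter_sum0 => /SinK [z Kz <-]; exact: Kstab.
  - rewrite /K iter_sumS => [[s [w [Hs [Kw ->]]]]].
    apply: Kadd; last by apply: Kstab; apply: IH.
    by have [z Kz <-] := SinK s Hs; apply: Kstab.
exists u => x.
have [Fx [HFx HFxl]] := gen_finite Ht [:: x].
have [m Hm] := Hexp Fx HFx.
apply/Hu; apply: (Kall m); apply: Hm; apply: HFxl; by rewrite inE.
Qed.
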